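(* Let $n$ be even, $F\colon\mathbb F_2^n\to\mathbb F_2^n$ a quadratic APN function, and $\mathcal V_F=\{V_b\colon b\in\mathbb F_2^n\setminus\{0\},\ \dim(V_b)\ge1\}$. Then $|N_F|=|\mathcal V_F|$.
   Context: $\langle\cdot,\cdot\rangle$ is the standard dot product. $F$ is APN if for every $a\ne0$ and $c$, $F(x)+F(x+a)=c$ has at most 2 solutions; quadratic if each component $F_b(x)=\langle b,F(x)\rangle$ is a quadratic form plus an affine function. $F_b$ is bent if $|W_F(b,a)|=2^{n/2}$ for all $a$, where $W_F(b,a)=\sum_x(-1)^{F_b(x)+\langle x,a\rangle}$. $N_F=\{b\in\mathbb F_2^n\setminus\{0\}\colon F_b\text{ is not bent}\}$. With $D_{F,a}(x)=F(x)+F(x+a)$, $H_b=\{x:\langle b,x\rangle=0\}$, $\overline{H_b}=\{x:\langle b,x\rangle=1\}$: $T_b=\{a:\mathrm{Im}(D_{F,a})=H_b\}\cup\{0\}$, $\overline{T_b}=\{a:\mathrm{Im}(D_{F,a})=\overline{H_b}\}$, $V_b=T_b\cup\overline{T_b}$ (a linear subspace). *)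

(* Defs.v *)
From HB Require Import structures.
From mathcomp Require Import all_boot all_order all_algebra.
Set Implicit Arguments. Unset Strict Implicit. Unset Printing Implicit Defensive.
Import GRing.Theory Num.Theory.
Local Open Scope ring_scope.

Notation vec n := 'rV['F_2]_n.

Definition dot (n : nat) (b x : vec n) : 'F_2 := \sum_(i < n) b 0 i * x 0 i.

Definition comp (n : nat) (F : vec n -> vec n) (b : vec n) (x : vec n) : 'F_2 :=
  dot b (F x).

Definition APN (n : nat) (F : vec n -> vec n) : Prop :=
  forall a c : vec n, a != 0 -> (#|[set x : vec n | (F x + F (x + a) == c)%R]| <= 2)%N.

Definition quadratic (n : nat) (F : vec n -> vec n) : Prop :=
  forall b : vec n, exists (Q : 'M['F_2]_n) (l : vec n) (c : 'F_2),
    forall x : vec n,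
      comp F b x = \sum_(i < n) \sum_(j < n) Q i j * x 0 i * x 0 j + dot l x + c.

Definition walsh (n : nat) (F : vec n -> vec n) (b a : vec n) : int :=
  \sum_(x : vec n) (if comp F b x + dot x a == 0 then 1 else -1).

Definition bent_comp (n : nat) (F : vec n -> vec n) (b : vec n) : bool :=
  [forall a : vec n, `|walsh F b a| == (2 ^ (n./2))%:Z].

Definition NF (n : nat) (F : vec n -> vec n) : {set vec n} :=
  [set b : vec n | (b != 0) && ~~ bent_comp F b].

Definition imD (n : nat) (F : vec n -> vec n) (a : vec n) : {set vec n} :=
  [set F x + F (x + a) | x : vec n].

Definition Hb (n : nat) (b : vec n) : {set vec n} := [set x | dot b x == 0].
Definition Hbbar (n : nat) (b : vec n) : {set vec n} := [set x | dot b x == 1].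

Definition Tb (n : nat) (F : vec n -> vec n) (b : vec n) : {set vec n} :=
  [set a | imD F a == Hb b] :|: [set 0].
Definition Tbbar (n : nat) (F : vec n -> vec n) (b : vec n) : {set vec n} :=
  [set a | imD F a == Hbbar b].
Definition Vb (n : nat) (F : vec n -> vec n) (b : vec n) : {set vec n} :=
  Tb F b :|: Tbbar F b.

Definition setdim (n : nat) (S : {set vec n}) : nat := \dim (<< enum S >>%VS).

Definition calV (n : nat) (F : vec n -> vec n) : {set {set vec n}} :=
  [set Vb F b | b in [set b : vec n | (b != 0) && (1 <= setdim (Vb F b))%N]].

(* Main.v *)
Require Import Defs.
From mathcomp Require Import all_boot all_order all_algebra.
From mathcomp Require Import zify ring lra.
Import GRing.Theory Num.Theory.
Local Open Scope ring_scope.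

Lemma F2cases (z : 'F_2) : z = 0 \/ z = 1.
Proof. case: z => -[|[|k]] Hk; [left|right|by []]; exact: val_inj. Qed.
Lemma F2two : (1 + 1 : 'F_2) = 0. Proof. exact: val_inj. Qed.
Lemma F2xx (z : 'F_2) : z + z = 0.
Proof. by case: (F2cases z) => ->; rewrite ?addr0 ?F2two. Qed.
Lemma F2eq (y z : 'F_2) : y + z = 0 -> y = z.
Proof. by move=> H; rewrite -[y]addr0 -(F2xx z) addrA H add0r. Qed.
Lemma F10 : (1 : 'F_2) != 0. Proof. by []. Qed.

Definition sg2 (t : 'F_2) : int := if t == 0 then 1 else -1.
Lemma sg2D s t : sg2 (s + t) = sg2 s * sg2 t.
Proof.
by case: (F2cases s) => ->; case: (F2cases t) => ->;
  rewrite ?addr0 ?add0r ?F2two /sg2 ?eqxx //=.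
Qed.
Lemma sg21 s : sg2 (s + 1) = - sg2 s.
Proof. by rewrite sg2D /sg2 /= mulrN1. Qed.

Section S.
Variable n : nat.
Implicit Types x y a b u e : vec n.

Lemma dotDl x y a : dot (x + y) a = dot x a + dot y a.
Proof. rewrite /dot -big_split /=; apply: eq_bigr => i _; by rewrite mxE mulrDl. Qed.
Lemma dotDr b x y : dot b (x + y) = dot b x + dot b y.
Proof. rewrite /dot -big_split /=; apply: eq_bigr => i _; by rewrite mxE mulrDr. Qed.
Lemma dot0r b : dot b 0 = 0.
Proof. rewrite /dot big1 // => i _; by rewrite mxE mulr0. Qed.
Lemma dot0l b : dot 0 b = 0.
Proof. rewrite /dot big1 // => i _; by rewrite mxE mul0r. Qed.
Lemma dot_delta x i : dot x (delta_mx 0 i) = x 0 i.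
Proof.
rewrite /dot (bigD1 i) //= big1 ?addr0 => [|j /negbTE ne]; rewrite mxE ?eqxx ?ne.
  by rewrite mulr1.
by rewrite mulr0.
Qed.
Lemma vxx x : x + x = 0.
Proof. by apply/matrixP => i j; rewrite !mxE F2xx. Qed.

Lemma nz_coord x : x != 0 -> exists i, x 0 i = 1.
Proof.
move=> nz; case: (pickP (fun i => x 0 i == 1)) => [i /eqP|H]; first by exists i.
case/eqP: nz; apply/matrixP => i j; rewrite (ord1 i) mxE.
case: (F2cases (x 0 j)) => // e; by move: (H j); rewrite e eqxx.
Qed.

Lemma sum_shift (h : vec n -> int) e : \sum_x h x = \sum_x h (x + e).
Proof. exact: (reindex_inj (addIr e)). Qed.

Lemma sum_anti (h : vec n -> int) e : (forall x, h (x + e) = - h x) -> \sum_x h x = 0.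
Proof.
move=> H; have := sum_shift h e; under [in X in _ = X -> _]eq_bigr do rewrite H.
rewrite sumrN => E; apply/eqP; have := mulrn_eq0 (\sum_x h x) 2; rewrite /= => <-; by rewrite mulr2n {2}E addrN.
Qed.


Lemma card_imD F u : APN F -> u != 0 -> (#|imD F u| * 2 = #|{: vec n}|)%N.
Proof.
move=> apn nz.
have -> : #|{: vec n}| = (\sum_(x : vec n) 1)%N by rewrite sum1_card.
rewrite (partition_big (fun x => F x + F (x + u)) (mem (imD F u))) /=; last first.
  by move=> x _; apply: imset_f.
rewrite -sum_nat_const; apply: eq_bigr => c /imsetP [x0 _ ->].
rewrite sum1dep_card; apply/eqP; rewrite eqn_leq; apply/andP; split; last first.
  apply: (leq_trans _ (apn u (F x0 + F (x0 + u)) nz)); apply: subset_leq_card.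
  by apply/subsetP => x; rewrite !inE.
have : #|[set x0; x0 + u]| = 2%N.
  rewrite cards2; suff -> : (x0 != x0 + u) by [].
  apply/eqP => E; have : x0 + 0 = x0 + u by rewrite addr0.
  by move/addrI => E2; rewrite -E2 eqxx in nz.
move=> H2; apply: (@leq_trans #|[set x0; x0 + u]|); first by rewrite H2.
apply: subset_leq_card; apply/subsetP => x; rewrite !inE.
case/orP=> /eqP ->; first by rewrite eqxx.
by rewrite -addrA vxx addr0 addrC eqxx.
Qed.

Lemma card_H b : b != 0 -> (#|Hb b| * 2 = #|{: vec n}|)%N /\ #|Hbbar b| = #|Hb b|.
Proof.
move=> /nz_coord [i bi].
have HC : Hbbar b = ~: Hb b.
  apply/setP => x; rewrite !inE; by case: (F2cases (dot b x)) => ->.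
have HI : Hbbar b = [set x + delta_mx 0 i | x in Hb b].
  apply/setP => x; rewrite !inE; apply/idP/imsetP.
    move=> H; exists (x + delta_mx 0 i); last by rewrite -addrA vxx addr0.
    by rewrite inE dotDr dot_delta bi (eqP H) F2two.
  case=> y; rewrite inE => /eqP Hy ->; by rewrite dotDr dot_delta bi Hy add0r.
have E2 : #|Hbbar b| = #|Hb b| by rewrite HI card_imset //; exact: addIr.
split=> //; by rewrite -(cardsC (Hb b)) -HC E2 muln2 addnn.
Qed.

Lemma const_Vb F b u d : APN F -> u != 0 -> b != 0 ->
  (forall x, dot b (F x + F (x + u)) = d) -> u \in Vb F b.
Proof.
move=> apn nz bnz Hd.
have [c1 c2] := card_H b bnz; have c3 := card_imD F u apn nz.
rewrite !inE; case: (F2cases d) => ed; subst d.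
- apply/orP; left; apply/orP; left; rewrite eqEcard; apply/andP; split.
    by apply/subsetP => y /imsetP [x _ ->]; rewrite inE Hd.
  by rewrite -(leq_pmul2r (isT : 0 < 2)%N) c1 c3.
- apply/orP; right; rewrite eqEcard; apply/andP; split.
    by apply/subsetP => y /imsetP [x _ ->]; rewrite inE Hd.
  by rewrite -(leq_pmul2r (isT : 0 < 2)%N) c2 c1 c3.
Qed.

Lemma quad3 (Q : 'M['F_2]_n) l (c : 'F_2) (f : vec n -> 'F_2)
  (Hf : forall x, f x = \sum_(i < n) \sum_(j < n) Q i j * x 0 i * x 0 j + dot l x + c)
  x e u :
  f (x + e) + f (x + e + u) + f x + f (x + u) + f e + f (e + u) + f 0 + f u = 0.
Proof.
pose q (y : vec n) : 'F_2 := \sum_(i < n) \sum_(j < n) Q i j * y 0 i * y 0 j.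
have Hq : q (x + e) + q (x + e + u) + q x + q (x + u) + q e + q (e + u) + q 0 + q u = 0.
  rewrite /q -!big_split /=; apply: big1 => i _; rewrite -!big_split /=.
  apply: big1 => j _; rewrite !mxE.
  set a := x 0 i; set a' := x 0 j; set b := e 0 i; set b' := e 0 j.
  set c1 := u 0 i; set c1' := u 0 j.
  transitivity ((1 + 1) * (Q i j * ((1 + 1) * (a * a' + b * b' + c1 * c1')
     + a * b' + b * a' + a * c1' + c1 * a' + b * c1' + c1 * b'))).
    ring.
  by rewrite F2two mul0r.
rewrite !Hf -/(q _) -/(q _) -/(q _) -/(q _) -/(q _) -/(q _) -/(q _) -/(q _).
transitivity ((q (x + e) + q (x + e + u) + q x + q (x + u) + q e + q (e + u) + q 0 + q u)
   + (1 + 1) * ((1 + 1) * (dot l x + dot l e + dot l u + (1 + 1) * c))).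
  rewrite !dotDr dot0r; ring.
by rewrite Hq F2two !mul0r addr0.
Qed.

Lemma quad2 (Q : 'M['F_2]_n) l (c : 'F_2) (f : vec n -> 'F_2)
  (Hf : forall x, f x = \sum_(i < n) \sum_(j < n) Q i j * x 0 i * x 0 j + dot l x + c)
  u x e :
  (f (x + e) + f (x + e + u)) = (f x + f (x + u)) + (f e + f (e + u)) + (f 0 + f (0 + u)).
Proof.
apply: F2eq; rewrite add0r; have := quad3 _ _ _ _ Hf x e u.
move=> H; rewrite -[RHS]H; ring.
Qed.

Lemma walsh_sq F b : b != 0 -> quadratic F -> APN F ->
  (forall u, u \in Vb F b -> u = 0) ->
  forall a, walsh F b a * walsh F b a = (#|{: vec n}|)%:Z.
Proof.
move=> bnz quad apn triv a.
have [Q [l [c Hf]]] := quad b.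
pose s x := sg2 (Defs.comp F b x + dot x a).
pose g u x := Defs.comp F b x + Defs.comp F b (x + u).
have Ew : walsh F b a = \sum_x s x by [].
have Es : forall x u, s x * s (x + u) = sg2 (g u x + dot u a).
  move=> x u; rewrite /s -sg2D; congr sg2; rewrite dotDl /g.
  transitivity (Defs.comp F b x + Defs.comp F b (x + u) + dot u a + (1 + 1) * dot x a).
    ring.
  by rewrite F2two mul0r addr0.
rewrite Ew mulr_suml.
transitivity (\sum_x \sum_u s x * s (x + u)).
  apply: eq_bigr => x _; rewrite mulr_sumr; exact: (reindex_inj (addrI x)).
rewrite exchange_big /= (bigD1 0) //= [X in _ + X]big1 ?addr0.
  under eq_bigr do rewrite Es /g addr0 F2xx dot0l addr0.
  by rewrite sumr_const /sg2 eqxx /= natz.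
move=> u nz.
under eq_bigr do rewrite Es.
case: (pickP (fun e => g u e + g u 0 == 1)) => [e /eqP He | H].
  apply: (sum_anti _ e) => x; rewrite /g (quad2 _ _ _ _ Hf u x e) -/(g u x) -/(g u e) add0r.
  by move: He; rewrite /g add0r -/(g u e) => He; rewrite -(addrA (g u x)) He addrAC sg21.
have : u \in Vb F b.
  apply: (const_Vb F b u (g u 0) apn nz bnz) => x; rewrite dotDr; apply: F2eq.
  by have := H x; case: (F2cases (g u x + g u 0)) => ->.
by move/triv => E; rewrite E eqxx in nz.
Qed.

Lemma Vb_im F b a : a \in Vb F b -> a != 0 -> imD F a = Hb b \/ imD F a = Hbbar b.
Proof.
rewrite !inE => /orP [/orP [/eqP H | /eqP->] | /eqP H] nz; auto.
by rewrite eqxx in nz.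
Qed.

Lemma notbent F b a : a \in Vb F b -> a != 0 -> ~~ bent_comp F b.
Proof.
move=> Ha nz.
have [d Hd] : exists d, forall x, dot b (F x + F (x + a)) = d.
  case: (Vb_im F b a Ha nz) => E; [exists 0|exists 1] => x;
   have : F x + F (x + a) \in imD F a by apply: imset_f.
    by rewrite E inE => /eqP.
  by rewrite E inE => /eqP.
have [i ai] := nz_coord a nz.
pose a' := if d == 0 then delta_mx 0 i else 0 : vec n.
have Hd1 : d + dot a a' = 1.
  rewrite /a'; case: (F2cases d) => ->; rewrite ?eqxx ?dot_delta ?ai ?add0r //.
  by rewrite dot0r addr0.
have W0 : walsh F b a' = 0.
  apply: (sum_anti _ a) => x.
  change (sg2 (Defs.comp F b (x + a) + dot (x + a) a') = - sg2 (Defs.comp F b x + dot x a')).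
  have Ec : Defs.comp F b (x + a) = Defs.comp F b x + d.
    rewrite /Defs.comp -(Hd x) dotDr.
    transitivity (dot b (F (x + a)) + (1 + 1) * dot b (F x)); last by ring.
    by rewrite F2two mul0r addr0.
  rewrite dotDl Ec -sg21; congr sg2; rewrite -Hd1; ring.
apply/negP => /forallP /(_ a') /eqP; rewrite W0 normr0 => -[] /esym /eqP.
by rewrite expn_eq0.
Qed.

Lemma setdim_pos (S : {set vec n}) : (1 <= setdim S)%N = [exists x in S, x != 0].
Proof.
apply/idP/idP => [|/existsP [x /andP [xS nz]]].
  apply: contraLR => /existsPn H; rewrite lt0n negbK dimv_eq0 -subv0.
  apply/span_subvP => x; rewrite mem_enum memv0 => xS.
  by have := H x; rewrite xS /= negbK.
rewrite lt0n dimv_eq0; apply: contra nz => /eqP E.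
by rewrite -memv0 -E memv_span // mem_enum.
Qed.

Lemma bent_of F b : ~~ odd n -> b != 0 -> quadratic F -> APN F ->
  (forall u, u \in Vb F b -> u = 0) -> bent_comp F b.
Proof.
move=> ev bnz quad apn triv; apply/forallP => a.
have W2 := walsh_sq F b bnz quad apn triv a.
have cn : #|{: vec n}| = (2 ^ n./2 * 2 ^ n./2)%N.
  rewrite card_mx card_Fp // mul1n -expnD addnn.
  by have := odd_double_half n; rewrite (negbTE ev) add0n => ->.
rewrite cn in W2.
move: W2; set W := walsh F b a; set k := (2 ^ n./2)%N => W2.
apply/eqP.
have H1 : `|W| * `|W| = k%:Z * k%:Z by rewrite -normrM W2 PoszM.
have H2 : 0 <= `|W| by [].
move: H1 H2; move: (`|W|) (k%:Z) (isT : 0 <= k%:Z) => x y; nia.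
Qed.
End S.

Theorem mainTheorem3 (n : nat) (F : 'rV['F_2]_n -> 'rV['F_2]_n) :
  ~~ odd n -> quadratic F -> APN F -> #|NF F| = #|calV F|.
Proof.
move=> ev quad apn.
set B := [set b : vec n | (b != 0) && (1 <= setdim (Vb F b))%N].
have -> : NF F = B.
  apply/setP => b; rewrite !inE; case bz: (b == 0) => //=.
  rewrite setdim_pos; case: (boolP [exists x in Vb F b, x != 0]).
    by move=> /existsP [a /andP [aV nz]]; rewrite (notbent _ _ _ _ aV nz).
  move=> /existsPn H; apply/negbF; apply: (bent_of _ _ _ ev) => //; first by rewrite bz.
  by move=> u uV; apply/eqP; have := H u; rewrite uV /= negbK.
have -> : calV F = Vb F @: B by [].
rewrite card_in_imset //.
move=> b1 b2; rewrite !inE => /andP [_ H1] /andP [_ H2] E.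
move: H1; rewrite setdim_pos => /existsP [a /andP [aV nz]].
have aV2 : a \in Vb F b2 by rewrite -E.
case: (Vb_im _ _ _ _ aV nz) (Vb_im _ _ _ _ aV2 nz) => -> [] /setP E2.
- apply/matrixP => i j; rewrite (ord1 i); have := E2 (delta_mx 0 j).
  rewrite !inE !dot_delta.
  by case: (F2cases (b1 0 j)) => ->; case: (F2cases (b2 0 j)) => ->.
- by have := E2 0; rewrite !inE !dot0r eqxx.
- by have := E2 0; rewrite !inE !dot0r eqxx.
- apply/matrixP => i j; rewrite (ord1 i); have := E2 (delta_mx 0 j).
  rewrite !inE !dot_delta.
  by case: (F2cases (b1 0 j)) => ->; case: (F2cases (b2 0 j)) => ->.
Qed.
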